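(* Let $n$ and $s$ be integers with $\gcd(s,n)=1$ and let $\mathcal C$ be an $\mathbb F_{q^n}$-subspace of $\mathcal L_{n,q}$ of dimension $k>1$. If $\dim(\mathcal C\cap\mathcal C^{[s]})=k-1$ and $\mathcal C\cap U_1=\{0\}$, then there exists $p(x)\in\mathcal L_{n,q}$ such that \[\mathcal C=\langle p(x),p(x)^{[s]},\ldots,p(x)^{[s(k-1)]}\rangle_{\mathbb F_{q^n}}.\] If moreover $\mathcal C$ contains at least one invertible linearized polynomial, then $p(x)$ is invertible and $\mathcal C$ is equivalent to $\mathcal G_{k,s}$.
   Context: $q$ is a prime power, $[i]:=q^i$. $\mathcal L_{n,q}$ is the $\mathbb F_{q^n}$-vector space of linearized polynomials $f(x)=\sum_{i=0}^{n-1}a_ix^{[i]}$, $a_i\in\mathbb F_{q^n}$, identified with $\mathbb F_q$-linear maps of $\mathbb F_{q^n}$ (so rank, kernel and invertibility refer to these maps; $\circ$ is composition). For $f(x)=\sum_i a_ix^{[i]}$, $f(x)^{[j]}:=x^{[j]}\circ f(x)=\sum_i a_i^{[j]}x^{[(i+j)\bmod n]}$, and $\mathcal C^{[j]}=\{f^{[j]}\colon f\in\mathcal C\}$. $U_1=\{\alpha x+\alpha^{[1]}x^{[1]}+\cdots+\alpha^{[n-1]}x^{[n-1]}\colon\alpha\in\mathbb F_{q^n}\}$. $\mathcal G_{k,s}=\langle x,x^{[s]},\ldots,x^{[s(k-1)]}\rangle_{\mathbb F_{q^n}}$. Two codes $\mathcal C,\mathcal C'\subseteq\mathcal L_{n,q}$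 are equivalent if there are invertible $h,g\in\mathcal L_{n,q}$ and a field automorphism $\sigma$ (acting on coefficients) with $\{h\circ f^\sigma\circ g\colon f\in\mathcal C\}=\mathcal C'$. *)

(* Defs.v *)
From HB Require Import structures.
From mathcomp Require Import all_boot all_order all_algebra all_field.
Set Implicit Arguments. Unset Strict Implicit. Unset Printing Implicit Defensive.
Import GRing.Theory.
Local Open Scope ring_scope.

(* The field F_{q^n} is a finite field K with #|K| = q^n.  A linearized
   polynomial f = sum_{i<n} a_i x^[i] is represented by its coefficient row
   vector a : 'rV[K]_n, so L_{n,q} = 'rV[K]_n is an n-dimensional K-space. *)

Section LinPoly.
Variables (K : finFieldType) (q n : nat).

Definition lp_eval (a : 'rV[K]_n) (x : K) : K :=
  \sum_(i < n) a 0 i * x ^+ (q ^ i).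

Definition lp_invertible (a : 'rV[K]_n) : Prop := bijective (lp_eval a).

Definition lp_x : 'rV[K]_n := \row_(i < n) ((i : nat) == 0%N)%:R.

(* f^[j] := x^[j] o f = sum_i a_i^[j] x^[(i+j) mod n], j a natural number *)
Definition lp_frob (j : nat) (a : 'rV[K]_n) : 'rV[K]_n :=
  \row_(k < n) \sum_(i < n | ((i + j) %% n)%N == k) (a 0 i) ^+ (q ^ j).

(* f^[s] for an integer s; since x^[n] = x on F_{q^n}, only s mod n matters *)
Definition lp_frobz (s : int) (a : 'rV[K]_n) : 'rV[K]_n :=
  lp_frob `|(s %% n%:Z)%Z|%N a.

(* composition f o g of linearized polynomials, reduced modulo x^[n] - x *)
Definition lp_comp (a b : 'rV[K]_n) : 'rV[K]_n :=
  \row_(k < n) \sum_(i < n) \sum_(j < n | ((i + j) %% n)%N == k)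
     a 0 i * (b 0 j) ^+ (q ^ i).

(* C^[s] = { f^[s] : f in C }, a K-subspace (spanned by the images of a basis,
   as f |-> f^[s] is semilinear w.r.t. the Frobenius automorphism) *)
Definition frobz_space (s : int) (C : {vspace 'rV[K]_n}) : {vspace 'rV[K]_n} :=
  <<map (lp_frobz s) (vbasis C)>>%VS.

Definition inU1 (f : 'rV[K]_n) : Prop :=
  exists alpha : K, f = \row_(i < n) alpha ^+ (q ^ i).

Definition frob_span (s : int) (k : nat) (p : 'rV[K]_n) : {vspace 'rV[K]_n} :=
  <<[seq lp_frobz (s * i%:Z) p | i <- iota 0 k]>>%VS.

Definition gabidulin (k : nat) (s : int) : {vspace 'rV[K]_n} :=
  frob_span s k lp_x.

Definition lp_equivalent (C C' : {vspace 'rV[K]_n}) : Prop :=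
  exists (h g : 'rV[K]_n) (sigma : {rmorphism K -> K}),
    [/\ lp_invertible h, lp_invertible g, bijective sigma &
      forall f : 'rV[K]_n,
        f \in C' <-> exists2 c, c \in C & f = lp_comp h (lp_comp (map_mx sigma c) g)].

End LinPoly.

Arguments lp_eval {K} q {n} a x.
Arguments lp_invertible {K} q {n} a.
Arguments lp_x {K n}.
Arguments lp_frob {K} q {n} j a.
Arguments lp_frobz {K} q {n} s a.
Arguments lp_comp {K} q {n} a b.
Arguments frobz_space {K} q {n} s C.
Arguments inU1 {K} q {n} f.
Arguments frob_span {K} q {n} s k p.
Arguments gabidulin {K} q {n} k s.
Arguments lp_equivalent {K} q {n} C C'.

(* Main.v *)
Require Import Defs.
From HB Require Import structures.
From mathcomp Require Import all_boot all_order all_algebra all_field.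
From mathcomp Require Import zify.
Import GRing.Theory.
Local Open Scope ring_scope.


Section Abstract.
Variables (F : fieldType) (V : vectType F) (phi : V -> V) (sig sigi : F -> F).
Hypotheses (phiD : forall u v, phi (u + v) = phi u + phi v)
  (phiZ : forall a v, phi (a *: v) = sig a *: phi v)
  (phi_inj : injective phi) (sigK : forall a, sig (sigi a) = a) (sig0 : sig 0 = 0).

Lemma phi0 : phi 0 = 0.
Proof. by rewrite -(scale0r (0 : V)) phiZ sig0 !scale0r. Qed.

Lemma phi_sum (I : Type) (r : seq I) (P : pred I) (G : I -> V) :
  phi (\sum_(i <- r | P i) G i) = \sum_(i <- r | P i) phi (G i).
Proof. exact: (big_morph phi phiD phi0). Qed.

Definition phiS (X : {vspace V}) : {vspace V} := <<map phi (vbasis X)>>%VS.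

Lemma phi_span (X : seq V) v : v \in <<X>>%VS -> phi v \in <<map phi X>>%VS.
Proof.
rewrite -{1}[X]in_tupleE => /coord_span ->; rewrite phi_sum.
apply: memv_suml => i _; rewrite phiZ; apply: memvZ; apply: memv_span.
apply: map_f; exact: mem_nth.
Qed.

Lemma mem_phiS (X : {vspace V}) u : u \in X -> phi u \in phiS X.
Proof. by move=> uX; apply: phi_span; rewrite (span_basis (vbasisP X)). Qed.

Lemma phiSP (X : {vspace V}) v : v \in phiS X -> exists2 u, u \in X & v = phi u.
Proof.
rewrite /phiS -[map phi _]/(val (map_tuple phi (vbasis X))) => /coord_span ->.
set c := coord _.
exists (\sum_i sigi (c i v) *: (vbasis X)`_i).
  apply: memv_suml => i _; apply: memvZ; apply: vbasis_mem; apply: mem_nth.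
  by rewrite size_tuple.
rewrite phi_sum; apply: eq_bigr => i _; rewrite phiZ sigK; congr (_ *: _).
by rewrite /= (nth_map 0) // size_tuple.
Qed.

Lemma phiS_dim (X : {vspace V}) : \dim (phiS X) = \dim X.
Proof.
have fr : free (map_tuple phi (vbasis X)).
  apply/freeP => k hk i.
  have h0 : \sum_i sigi (k i) *: (vbasis X)`_i = 0.
    apply: phi_inj; rewrite phi0 phi_sum -[in RHS]hk; apply: eq_bigr => j _.
    by rewrite phiZ sigK /= (nth_map 0) // size_tuple.
  move/freeP: (basis_free (vbasisP X)) => /(_ _ h0 i).
  by move=> h; rewrite -[k i]sigK h sig0.
by rewrite /phiS (eqP fr) /= size_map size_tuple.
Qed.

Lemma phiS_mono (X Y : {vspace V}) : (X <= Y)%VS -> (phiS X <= phiS Y)%VS.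
Proof.
move=> /subvP sXY; apply/subvP => v /phiSP [u uX ->].
by apply: mem_phiS; apply: sXY.
Qed.

Lemma iter_phi0 i : iter i phi 0 = 0.
Proof. by elim: i => //= i ->; rewrite phi0. Qed.

Lemma iter_phi_inj i : injective (iter i phi).
Proof. by elim: i => // i IH u v /= /phi_inj /IH. Qed.

Lemma phi_spanP (X : seq V) v :
  v \in <<map phi X>>%VS -> exists2 u, u \in <<X>>%VS & v = phi u.
Proof.
rewrite -[map phi X]/(val (map_tuple phi (in_tuple X))) => /coord_span ->.
set c := coord _.
exists (\sum_i sigi (c i v) *: X`_i).
  by apply: memv_suml => i _; apply: memvZ; apply: memv_span; apply: mem_nth.
rewrite phi_sum; apply: eq_bigr => i _; rewrite phiZ sigK; congr (_ *: _).
by rewrite /= (nth_map 0).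
Qed.

Variable C : {vspace V}.

Fixpoint B j : {vspace V} :=
  if j is j'.+1 then (B j' :&: phiS (B j'))%VS else C.

Lemma B_sub j : (B j.+1 <= B j)%VS.
Proof. exact: capvSl. Qed.

Lemma B_subC j : (B j <= C)%VS.
Proof. by elim: j => //= j IH; apply: subv_trans (capvSl _ _) IH. Qed.

Lemma B_in j v : v \in B j -> forall i, (i <= j)%N -> exists2 u, u \in C & v = iter i phi u.
Proof.
elim: j v => [|j IH] v.
  by move=> vC i; rewrite leqn0 => /eqP ->; exists v.
move=> /= /memv_capP [vB vS] i; rewrite leq_eqVlt => /orP [/eqP ->|lt].
  have [w wB ->] := @phiSP _ v vS.
  have [u uC ->] := IH w wB j (leqnn j).
  by exists u.
exact: IH.
Qed.

Variable k : nat.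
Hypotheses (dimC : \dim C = k) (k_gt1 : (1 < k)%N)
  (dimC1 : \dim (C :&: phiS C)%VS = k.-1)
  (NoStab : forall S : {vspace V}, (S <= C)%VS ->
     (forall v, v \in S -> phi v \in S) -> S = 0%VS).

Lemma stable_eq (D : {vspace V}) : (D <= C)%VS -> (D <= phiS D)%VS -> D = 0%VS.
Proof.
move=> sDC sD.
have e : D = phiS D by apply/eqP; rewrite eqEdim sD phiS_dim leqnn.
by apply: NoStab => // v vD; rewrite e; apply: mem_phiS.
Qed.

Lemma Bdim_step j : \dim (B j) = (k - j)%N -> \dim (B j.+1) = (k - j.+1)%N ->
  (j.+2 < k)%N -> \dim (B j.+2) = (k - j.+2)%N.
Proof.
move=> hE hD hj; rewrite [B j.+2]/=; set D := B j.+1.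
have sD1 : (D <= phiS (B j))%VS by apply: capvSr.
have sD2 : (phiS D <= phiS (B j))%VS by apply: phiS_mono; apply: B_sub.
have hsum : (\dim (D + phiS D) <= k - j)%N.
  by rewrite -hE -(phiS_dim (B j)); apply: dimvS; rewrite subv_add sD1 sD2.
have hsc := dimv_sum_cap D (phiS D); rewrite phiS_dim in hsc.
have hle : (\dim (D :&: phiS D) <= \dim D)%N by apply: dimvS; apply: capvSl.
have hne : \dim (D :&: phiS D) != \dim D.
  apply/negP => /eqP h.
  have e : (D :&: phiS D)%VS = D by apply/eqP; rewrite eqEdim capvSl h leqnn.
  have D0 : D = 0%VS.
    apply: stable_eq; first exact: B_subC.
    by rewrite -{1}e capvSr.
  by move: hD; rewrite -/D D0 dimv0; lia.
move: hne; rewrite -/D hD in hsc hle * => hne.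
change (\dim (D :&: phiS D) = (k - j.+2)%N); lia.
Qed.

Lemma Bdim2 j : (j.+1 < k)%N ->
  \dim (B j) = (k - j)%N /\ \dim (B j.+1) = (k - j.+1)%N.
Proof.
elim: j => [|j IH] hj.
  by split; [rewrite dimC subn0 | rewrite /= dimC1 subn1].
have [h1 h2] := IH (ltnW hj); split => //.
by apply: Bdim_step.
Qed.

Lemma Bdim j : (j < k)%N -> \dim (B j) = (k - j)%N.
Proof.
case: j => [|j] hj; first by rewrite dimC subn0.
by have [] := @Bdim2 j hj.
Qed.

Lemma main_exists : exists P, C = <<[seq iter i phi P | i <- iota 0 k]>>%VS.
Proof.
have hd : \dim (B k.-1) = 1%N by rewrite Bdim; lia.
set v := vpick (B k.-1).
have vB : v \in B k.-1 := memv_pick _.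
have v0 : v != 0 by rewrite vpick0 -dimv_eq0 hd.
have [P PC vP] := @B_in _ _ vB _ (leqnn k.-1).
have inC : forall i, (i < k)%N -> iter i phi P \in C.
  move=> i ik; have [u uC vu] := @B_in _ _ vB _ (leq_subr i k.-1).
  have : iter (k.-1 - i) phi (iter i phi P) = iter (k.-1 - i) phi u.
    by rewrite -iterD subnK -?vP -?vu //; lia.
  by move/iter_phi_inj => ->.
have P0 : P != 0 by apply: contraNneq v0 => P0; rewrite vP P0 iter_phi0.
have frX : forall j, (j <= k)%N -> free [seq iter i phi P | i <- iota 0 j].
  elim=> [|j IH] hj; first exact: nil_free.
  rewrite -addn1 iotaD map_cat /= (perm_free (permEl (perm_catC _ _))) /= free_cons.
  rewrite IH ?andbT; last by lia.
  apply/negP => yS.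
  set Y := [seq iter i phi P | i <- iota 0 j] in yS *.
  have S0 : <<Y>>%VS = 0%VS.
    apply: NoStab.
      apply/span_subvP => w /mapP [i]; rewrite mem_iota => /andP[_ ij] ->.
      by apply: inC; lia.
    move=> w /phi_span; apply/subvP; apply/span_subvP => z /mapP [w'].
    move=> /mapP [i]; rewrite mem_iota => /andP[_ ij] -> ->.
    rewrite -iterS; have : (i.+1 < j)%N \/ i.+1 = j by lia.
    case=> [lt|ej]; last by rewrite ej; rewrite add0n in yS.
    by apply: memv_span; apply: map_f; rewrite mem_iota.
  have : P \in <<Y>>%VS.
    have [j0|jpos] := posnP j; first by move: yS; rewrite j0 add0n.
    by apply: memv_span; rewrite /Y; apply/mapP; exists 0%N => //; rewrite mem_iota; lia.
  by rewrite S0 memv0 (negbTE P0).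
exists P; apply/eqP; rewrite eq_sym eqEdim; apply/andP; split.
  apply/span_subvP => w /mapP [i]; rewrite mem_iota => /andP [_ ik] ->.
  by apply: inC; lia.
by rewrite dimC (eqP (frX k (leqnn k))) size_map size_iota.
Qed.

End Abstract.


Lemma sum_shift (V : zmodType) (N : nat) (f : nat -> V) :
  f N = f 0%N -> \sum_(j < N) f j.+1 = \sum_(j < N) f j.
Proof.
case: N => [|N] h; first by rewrite !big_ord0.
by rewrite big_ord_recr /= h big_ord_recl /= addrC.
Qed.

Section Basics.
Variables (K : finFieldType) (p m q n : nat).
Hypotheses (pr_p : prime p) (m_gt0 : (0 < m)%N) (qE : q = (p ^ m)%N)
  (n_gt0 : (0 < n)%N) (cardK : #|K| = (q ^ n)%N).

Lemma q_gt1 : (1 < q)%N.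
Proof. by rewrite qE -(expn0 p) ltn_exp2l // prime_gt1. Qed.

Lemma charK : p \in [pchar K].
Proof. by apply: (@card_finPcharP _ p (m * n)) => //; rewrite cardK qE expnM. Qed.

Lemma frobD j (x y : K) : (x + y) ^+ (q ^ j) = x ^+ (q ^ j) + y ^+ (q ^ j).
Proof.
apply: exprDn_pchar; rewrite qE -expnM pnatX.
by rewrite (pnatE _ pr_p) charK.
Qed.

Lemma frob0 j : (0 : K) ^+ (q ^ j) = 0.
Proof. by rewrite expr0n expn_eq0 (negbTE (lt0n_neq0 (ltnW q_gt1))). Qed.

Lemma frob_sum j (r : seq 'I_n) (P : pred 'I_n) (F : 'I_n -> K) :
  (\sum_(i <- r | P i) F i) ^+ (q ^ j) = \sum_(i <- r | P i) (F i) ^+ (q ^ j).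
Proof. exact: (big_morph (fun x : K => x ^+ (q ^ j)) (frobD j) (frob0 j)). Qed.

Lemma frobnt t (x : K) : x ^+ (q ^ (n * t)) = x.
Proof.
elim: t => [|t IH]; first by rewrite muln0 expn0 expr1.
by rewrite mulnS addnC expnD exprM IH -cardK expf_card.
Qed.

Lemma frob_mod a (x : K) : x ^+ (q ^ a) = x ^+ (q ^ (a %% n)).
Proof. by rewrite {1}(divn_eq a n) expnD exprM mulnC frobnt. Qed.

Lemma frob_eqmod a b (x : K) : a = b %[mod n] -> x ^+ (q ^ a) = x ^+ (q ^ b).
Proof. by move=> h; rewrite frob_mod h -frob_mod. Qed.

Lemma lp_evalD (a b : 'rV[K]_n) x :
  lp_eval q (a + b) x = lp_eval q a x + lp_eval q b x.
Proof. by rewrite /lp_eval -big_split; apply: eq_bigr => i _; rewrite mxE mulrDl. Qed.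

Lemma lp_evalB (a b : 'rV[K]_n) x :
  lp_eval q (a - b) x = lp_eval q a x - lp_eval q b x.
Proof. by rewrite /lp_eval -sumrB; apply: eq_bigr => i _; rewrite !mxE mulrBl. Qed.

Lemma lp_evalZ c (a : 'rV[K]_n) x : lp_eval q (c *: a) x = c * lp_eval q a x.
Proof. by rewrite /lp_eval mulr_sumr; apply: eq_bigr => i _; rewrite mxE mulrA. Qed.

Lemma sum_mod_pick (e : 'I_n -> nat) (F : 'I_n -> K) (y : nat -> K) :
  \sum_(k < n) (\sum_(i < n | (e i %% n)%N == k) F i) * y k
  = \sum_(i < n) F i * y (e i %% n)%N.
Proof.
under eq_bigr do rewrite mulr_suml.
rewrite (exchange_big_dep xpredT) //=; apply: eq_bigr => i _.
by rewrite (big_pred1 (Ordinal (ltn_pmod (e i) n_gt0))).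
Qed.


Lemma lp_eval_frob j (a : 'rV[K]_n) x :
  lp_eval q (lp_frob q j a) x = (lp_eval q a x) ^+ (q ^ j).
Proof.
rewrite /lp_eval /lp_frob; under eq_bigr do rewrite mxE.
rewrite (sum_mod_pick (fun i => i + j)%N (fun i => a 0 i ^+ (q ^ j))
  (fun k => x ^+ (q ^ k))) frob_sum; apply: eq_bigr => i _.
by rewrite exprMn -exprM -expnD -frob_mod.
Qed.

Lemma lp_eval_comp (a b : 'rV[K]_n) x :
  lp_eval q (lp_comp q a b) x = lp_eval q a (lp_eval q b x).
Proof.
rewrite /lp_eval /lp_comp; under eq_bigr do rewrite mxE mulr_suml.
rewrite exchange_big /=; apply: eq_bigr => i _.
rewrite (sum_mod_pick (fun j => i + j)%N (fun j => a 0 i * b 0 j ^+ (q ^ i))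
  (fun k => x ^+ (q ^ k))) frob_sum mulr_sumr; apply: eq_bigr => j _.
by rewrite exprMn -exprM -expnD -frob_mod addnC mulrA.
Qed.

Lemma size_sum_le (F : 'I_n -> {poly K}) N :
  (forall i, (size (F i) <= N)%N) -> (size (\sum_i F i)%R <= N)%N.
Proof.
move=> H; apply: (big_ind (fun P : {poly K} => (size P <= N)%N)) => //.
- by rewrite size_poly0.
- move=> P Q hP hQ; apply: leq_trans (size_polyD _ _) _.
  by rewrite geq_max hP hQ.
Qed.

Lemma poly_all_roots (P : {poly K}) :
  (size P <= q ^ n)%N -> (forall x, P.[x] = 0) -> P = 0.
Proof.
move=> hs hr; apply: (@roots_geq_poly_eq0 _ P (enum K)).
- by apply/allP => x _; rewrite /root hr.
- exact: enum_uniq.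
- by rewrite -cardE cardK.
Qed.

Lemma size_term c e : (e < q ^ n)%N -> (size (c *: 'X^e : {poly K}) <= q ^ n)%N.
Proof. by move=> he; apply: leq_trans (size_scale_leq _ _) _; rewrite size_polyXn. Qed.

Lemma lp_eval_inj0 (a : 'rV[K]_n) : (forall x, lp_eval q a x = 0) -> a = 0.
Proof.
move=> H.
pose P : {poly K} := \sum_(i < n) a 0 i *: 'X^(q ^ i).
have P0 : P = 0.
  apply: poly_all_roots.
    by apply: size_sum_le => i; apply: size_term; rewrite ltn_exp2l ?q_gt1.
  move=> x; rewrite -(H x) /P horner_sum /lp_eval; apply: eq_bigr => i _.
  by rewrite hornerZ hornerXn.
apply/rowP => i; rewrite mxE.
have := congr1 (fun P : {poly K} => P`_(q ^ i)) P0.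
rewrite /P coef_sum coef0 => <-.
under eq_bigr do rewrite coefZ coefXn.
rewrite (bigD1 i) //= eqxx mulr1 big1 ?addr0 // => j ji.
by rewrite eqn_exp2l ?q_gt1 // (inj_eq val_inj) eq_sym (negbTE ji) mulr0.
Qed.

Lemma lp_eval_inj (a b : 'rV[K]_n) :
  (forall x, lp_eval q a x = lp_eval q b x) -> a = b.
Proof.
move=> H; apply/eqP; rewrite -subr_eq0; apply/eqP/lp_eval_inj0 => x.
by rewrite lp_evalB H subrr.
Qed.

Lemma frob_indep (c : nat -> K) (e : nat -> nat) :
  (forall x, \sum_(j < n) c j * x ^+ (q ^ e j) = 0) ->
  (forall j, (0 < j < n)%N -> (e j %% n != 0)%N) -> (e 0 %% n = 0)%N -> c 0%N = 0.
Proof.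
move=> H He He0.
pose P : {poly K} := \sum_(j < n) c j *: 'X^(q ^ (e j %% n)).
have P0 : P = 0.
  apply: poly_all_roots.
    by apply: size_sum_le => i; apply: size_term; rewrite ltn_exp2l ?q_gt1 ?ltn_pmod.
  move=> x; rewrite -(H x) /P horner_sum; apply: eq_bigr => i _.
  by rewrite hornerZ hornerXn -frob_mod.
have := congr1 (fun P : {poly K} => P`_1) P0.
rewrite /P coef_sum coef0 => <-.
under eq_bigr do rewrite coefZ coefXn.
rewrite (bigD1 (Ordinal n_gt0)) //= He0 expn0 eqxx mulr1 big1 ?addr0 // => j j0.
have hj : (0 < j < n)%N.
  by rewrite ltn_ord andbT lt0n; apply: contra j0 => /eqP j0'; apply/eqP/val_inj.
by rewrite -(expn0 q) eqn_exp2l ?q_gt1 // eq_sym (negbTE (He _ hj)) mulr0.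
Qed.

Lemma lp_frobD j (a b : 'rV[K]_n) :
  lp_frob q j (a + b) = lp_frob q j a + lp_frob q j b.
Proof. by apply: lp_eval_inj => x; rewrite lp_evalD !lp_eval_frob lp_evalD frobD. Qed.

Lemma lp_frobZ j c (a : 'rV[K]_n) :
  lp_frob q j (c *: a) = c ^+ (q ^ j) *: lp_frob q j a.
Proof. by apply: lp_eval_inj => x; rewrite lp_evalZ !lp_eval_frob lp_evalZ exprMn. Qed.

Lemma lp_frob_comp i j (a : 'rV[K]_n) :
  lp_frob q i (lp_frob q j a) = lp_frob q (j + i) a.
Proof. by apply: lp_eval_inj => x; rewrite !lp_eval_frob -exprM -expnD. Qed.

Lemma lp_frob_eqmod i j (a : 'rV[K]_n) :
  i = j %[mod n] -> lp_frob q i a = lp_frob q j a.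
Proof. by move=> h; apply: lp_eval_inj => x; rewrite !lp_eval_frob (@frob_eqmod i j _ h). Qed.

Lemma lp_frob0 (a : 'rV[K]_n) : lp_frob q 0 a = a.
Proof. by apply: lp_eval_inj => x; rewrite lp_eval_frob expn0 expr1. Qed.

Lemma lp_frob_inj j : injective (@lp_frob K q n j).
Proof.
move=> a b h.
have: lp_frob q (j * n.-1) (lp_frob q j a) = lp_frob q (j * n.-1) (lp_frob q j b).
  by rewrite h.
rewrite !lp_frob_comp addnC -mulnSr (prednK n_gt0).
by rewrite !(@lp_frob_eqmod (j * n) 0) ?modnMl ?mod0n // !lp_frob0.
Qed.

Lemma lp_frob_iter j i (a : 'rV[K]_n) :
  iter i (lp_frob q j) a = lp_frob q (j * i) a.
Proof.
elim: i => [|i IH]; first by rewrite muln0 lp_frob0.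
by rewrite iterS IH lp_frob_comp mulnS addnC.
Qed.

Lemma frob_inv j (x : K) : (x ^+ (q ^ (j * n.-1))) ^+ (q ^ j) = x.
Proof.
rewrite -exprM -expnD -mulnSr (prednK n_gt0).
by rewrite (@frob_eqmod _ 0) ?modnMl ?mod0n // expn0 expr1.
Qed.

Lemma lp_eval0 x : lp_eval q (0 : 'rV[K]_n) x = 0.
Proof. by rewrite /lp_eval big1 // => i _; rewrite mxE mul0r. Qed.

Lemma lp_eval_sum (I : Type) (r : seq I) (P : pred I) (G : I -> 'rV[K]_n) x :
  lp_eval q (\sum_(i <- r | P i) G i) x = \sum_(i <- r | P i) lp_eval q (G i) x.
Proof.
exact: (big_morph (fun a => lp_eval q a x) (fun a b => lp_evalD a b x) (lp_eval0 x)).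
Qed.

Lemma lp_eval_span (X : seq 'rV[K]_n) x y g : g \in <<X>>%VS ->
  (forall h, h \in X -> lp_eval q h x = lp_eval q h y) -> lp_eval q g x = lp_eval q g y.
Proof.
rewrite -{1}[X]in_tupleE => /coord_span -> H; rewrite !lp_eval_sum.
by apply: eq_bigr => i _; rewrite !lp_evalZ H // mem_nth.
Qed.

Lemma lp_eval_x x : lp_eval q (lp_x : 'rV[K]_n) x = x.
Proof.
rewrite /lp_eval (bigD1 (Ordinal n_gt0)) //= mxE eqxx mul1r expn0 expr1.
rewrite big1 ?addr0 // => i i0; rewrite mxE.
have hi : (i : nat) != 0%N by apply: contra i0 => /eqP h; apply/eqP/val_inj.
by rewrite (negbTE hi) mul0r.
Qed.

Lemma lp_comp_x (a : 'rV[K]_n) : lp_comp q lp_x a = a.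
Proof. by apply: lp_eval_inj => x; rewrite lp_eval_comp lp_eval_x. Qed.

Lemma lp_comp_frob j (a b : 'rV[K]_n) :
  lp_comp q (lp_frob q j a) b = lp_frob q j (lp_comp q a b).
Proof. by apply: lp_eval_inj => x; rewrite lp_eval_comp !lp_eval_frob lp_eval_comp. Qed.

Lemma lp_compD (a a' b : 'rV[K]_n) :
  lp_comp q (a + a') b = lp_comp q a b + lp_comp q a' b.
Proof. by apply: lp_eval_inj => x; rewrite lp_eval_comp !lp_evalD !lp_eval_comp. Qed.

Lemma lp_compZ c (a b : 'rV[K]_n) : lp_comp q (c *: a) b = c *: lp_comp q a b.
Proof. by apply: lp_eval_inj => x; rewrite lp_eval_comp !lp_evalZ lp_eval_comp. Qed.

Lemma frobz_iter (s : int) i (a : 'rV[K]_n) :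
  lp_frobz q (s * i%:Z) a = iter i (lp_frobz q s) a.
Proof.
rewrite /lp_frobz lp_frob_iter; apply: lp_frob_eqmod.
have h : ((s * i%:Z) %% n%:Z)%Z = ((`|(s %% n%:Z)%Z|%N * i)%N %% n)%N :> int.
  rewrite -modz_nat PoszM gez0_abs ?modzMml // modz_ge0 //.
  by rewrite eqz_nat -lt0n.
by rewrite h absz_nat modn_mod.
Qed.

Lemma cop_mod (s : int) : coprime `|s|%N n -> coprime `|(s %% n%:Z)%Z|%N n.
Proof.
move=> c; have : coprimez (s %% n%:Z)%Z n%:Z by rewrite /coprimez gcdz_modl.
by rewrite coprimezE absz_nat.
Qed.

Lemma fixed_U1 s' (w : 'rV[K]_n) : coprime s' n -> lp_frob q s' w = w -> inU1 q w.
Proof.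
move=> cop fw.
have [t ht] : exists t, ((s' * t) %% n = 1 %% n)%N.
  have [s0|spos] := posnP s'.
    move: cop; rewrite s0 /coprime gcd0n => /eqP n1; exists 0%N; by rewrite n1 !modn1.
  have /(coprimeP _ spos) [[u1 u2] /= hu] := cop.
  exists u1; have -> : (s' * u1 = u2 * n + 1)%N by lia.
  by rewrite modnMDl.
have f1 : lp_frob q 1 w = w.
  rewrite -(@lp_frob_eqmod (s' * t)) // -lp_frob_iter.
  by elim: t {ht} => //= t ->.
have crd : forall (i kk : 'I_n), (i.+1 = kk)%N -> w 0 kk = (w 0 i) ^+ q.
  move=> i kk e; rewrite -{1}f1 mxE (big_pred1 i) ?expn1 // => i' /=.
  have := ltn_ord i'; have := ltn_ord kk; have := ltn_ord i.
  rewrite -(inj_eq val_inj) /=.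
  case: (ltngtP (i' + 1) n) => h; first by rewrite modn_small //; move=> *; apply/eqP/eqP; lia.
    by lia.
  rewrite h modnn => *; apply/eqP/eqP; lia.
have all : forall i (hi : (i < n)%N), w 0 (Ordinal hi) = (w 0 (Ordinal n_gt0)) ^+ (q ^ i).
  elim=> [|i IH] hi.
    by rewrite expn0 expr1; congr (w 0 _); apply: val_inj.
  have hi' : (i < n)%N by apply: ltnW.
  by rewrite (crd (Ordinal hi') (Ordinal hi)) // IH expnSr exprM.
exists (w 0 (Ordinal n_gt0)); apply/rowP => i; rewrite mxE.
by rewrite -all; congr (w 0 _); apply: val_inj.
Qed.

Lemma main_sec (s : int) (k : nat) (C : {vspace 'rV[K]_n}) :
  coprime `|s|%N n -> \dim C = k -> (1 < k)%N ->
  \dim (C :&: frobz_space q s C)%VS = k.-1 ->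
  (forall f, f \in C -> inU1 q f -> f = 0) ->
  exists P : 'rV[K]_n,
    C = frob_span q s k P /\
    ((exists2 f, f \in C & lp_invertible q f) ->
       lp_invertible q P /\ lp_equivalent q C (gabidulin q k s)).
Proof.
move=> cop dimC k_gt1 dimC1 U1.
set s' := `|(s %% n%:Z)%Z|%N.
have cop' : coprime s' n := @cop_mod s cop.
pose phi : 'rV[K]_n -> 'rV[K]_n := lp_frobz q s.
have phiE : forall a, phi a = lp_frob q s' a by [].
have phiD : forall u v, phi (u + v) = phi u + phi v.
  by move=> u v; rewrite !phiE lp_frobD.
have phiZ : forall c v, phi (c *: v) = (fun x => x ^+ (q ^ s')) c *: phi v.
  by move=> c v; rewrite !phiE lp_frobZ.
have phi_inj : injective phi by move=> a b; apply: lp_frob_inj.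
have sigK : forall a, (fun x : K => x ^+ (q ^ s')) ((fun x => x ^+ (q ^ (s' * n.-1))) a) = a.
  by move=> a; apply: frob_inv.
have sig0 := frob0 s'.
have iterE : forall i a, iter i phi a = lp_frob q (s' * i) a.
  by move=> i a; rewrite -lp_frob_iter.
have NoStab : forall S : {vspace 'rV[K]_n}, (S <= C)%VS ->
    (forall v, v \in S -> phi v \in S) -> S = 0%VS.
  move=> S sSC stS; apply/eqP; rewrite -subv0; apply/subvP => v vS; rewrite memv0.
  apply/eqP.
  have iterS_in : forall i u, u \in S -> iter i phi u \in S.
    by elim=> //= i IH u uS; apply: stS; apply: IH.
  pose w c := \sum_(j < n) iter j phi (c *: v).
  have wS : forall c, w c \in S.
    by move=> c; apply: memv_suml => j _; apply: iterS_in; apply: memvZ.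
  have wfix : forall c, phi (w c) = w c.
    move=> c; rewrite /w (phi_sum _ _ _ _ phiD phiZ sig0).
    have hn : iter n phi (c *: v) = c *: v.
      by rewrite iterE (@lp_frob_eqmod _ 0) ?modnMl ?mod0n // lp_frob0.
    exact: (@sum_shift _ n (fun j => iter j phi (c *: v)) hn).
  have w0 : forall c, w c = 0.
    by move=> c; apply: U1; [apply: (subvP sSC); apply: wS | apply: (@fixed_U1 s' (w c) cop'); exact: wfix].
  apply/rowP => t.
  have := (@frob_indep (fun j => lp_frob q (s' * j) v 0 t) (fun j => s' * j)%N).
  rewrite muln0 lp_frob0 mxE; apply.
  - move=> x; have := congr1 (fun a : 'rV[K]_n => a 0 t) (w0 x); rewrite /w summxE mxE => h.
    rewrite -[RHS]h; apply: eq_bigr => j _.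
    by rewrite iterE lp_frobZ [in RHS]mxE mulrC.
  - move=> j /andP[j0 jn]; apply/negP => h.
    have : (n %| s' * j)%N by rewrite /dvdn h.
    rewrite Gauss_dvdr; last by rewrite coprime_sym.
    by move=> /dvdn_leq => /(_ j0); lia.
  - by rewrite mod0n.
have [P hP] := main_exists _ _ _ _ _ phiD phiZ phi_inj sigK sig0 _ _ dimC k_gt1 dimC1 NoStab.
have spanE : forall a, frob_span q s k a = <<[seq iter i phi a | i <- iota 0 k]>>%VS.
  by move=> a; rewrite /frob_span; congr <<_>>%VS; apply: eq_map => i; apply: frobz_iter.
exists P; split; first by rewrite spanE.
case=> f fC /bij_inj finj.
have Pinj : injective (lp_eval q P).
  move=> x y hxy; apply: finj.
  apply: (@lp_eval_span [seq iter i phi P | i <- iota 0 k]); first by rewrite -hP.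
  by move=> h /mapP [i _ ->]; rewrite iterE !lp_eval_frob hxy.
have Pbij : lp_invertible q P := injF_bij Pinj.
split => //.
have Phi_inj : injective (fun b : 'rV[K]_n => lp_comp q P b).
  by move=> b1 b2 /= e; apply: lp_eval_inj => x; apply: Pinj; rewrite -!lp_eval_comp e.
have [Phiinv _ PhiK] := injF_bij Phi_inj.
set g := Phiinv lp_x.
have Pg : lp_comp q P g = lp_x := PhiK lp_x.
have Pg_eval : forall x, lp_eval q P (lp_eval q g x) = x.
  by move=> x; rewrite -lp_eval_comp Pg lp_eval_x.
have ginv : lp_invertible q g.
  by apply: injF_bij => x y e; rewrite -(Pg_eval x) -(Pg_eval y) e.
exists lp_x, g, idfun; split => //.
- by apply: injF_bij => x y; rewrite !lp_eval_x.
- by exists idfun.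
pose L := fun c => lp_comp q c g.
have simp : forall c, lp_comp q lp_x (lp_comp q (map_mx (idfun : {rmorphism K -> K}) c) g) = L c.
  by move=> c; rewrite lp_comp_x map_mx_id.
have LD : forall u v, L (u + v) = L u + L v by move=> u v; apply: lp_compD.
have LZ : forall c v, L (c *: v) = id c *: L v by move=> c v; apply: lp_compZ.
have gabE : gabidulin q k s = <<map L [seq iter i phi P | i <- iota 0 k]>>%VS.
  rewrite /gabidulin spanE -map_comp; congr <<_>>%VS; apply: eq_map => i /=.
  by rewrite /L !iterE lp_comp_frob Pg.
move=> f'; rewrite gabE; split.
  move/(phi_spanP _ _ L id id LD LZ (fun a => erefl) (erefl _)) => [c cS ->].
  by exists c; [rewrite hP | rewrite simp].
case=> c cC ->; rewrite simp; apply: (phi_span _ _ L id LD LZ erefl).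
by rewrite -hP.
Qed.

End Basics.

Theorem lemma3p5 (K : finFieldType) (p m q n : nat) (s : int) (k : nat)
    (C : {vspace 'rV[K]_n}) :
  prime p -> (0 < m)%N -> q = (p ^ m)%N -> (0 < n)%N -> #|K| = (q ^ n)%N ->
  coprime `|s|%N n ->
  \dim C = k -> (1 < k)%N ->
  \dim (C :&: frobz_space q s C)%VS = k.-1 ->
  (forall f, f \in C -> inU1 q f -> f = 0) ->
  exists P : 'rV[K]_n,
    C = frob_span q s k P /\
    ((exists2 f, f \in C & lp_invertible q f) ->
       lp_invertible q P /\ lp_equivalent q C (gabidulin q k s)).
Proof.
move=> pr_p m_gt0 qE n_gt0 cardK cop dimC k_gt1 dimC1 U1.
exact: (main_sec _ _ _ _ _ pr_p m_gt0 qE n_gt0 cardK _ _ _ cop dimC k_gt1 dimC1 U1).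
Qed.
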